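(* For each arrival $t\ge1$ and each level $i\ge 0$, we have $\mathscr{C}^{(t-1)}_{i+1}\preceq\mathscr{C}^{(t)}_{{\rm inh},i}$.
   Context: An offline instance $(\mathcal{M},D)$ consists of demand pairs $D=\{(u_j,v_j)\}$ over a terminal set $V=\{u_j,v_j\}$, each terminal in exactly one pair (the other element of its pair is its mate), and a metric $\mathcal{M}$ on $V$ with all distances at least $1$, viewed as the complete graph on $V$ with edge costs equal to distances. A clustering of $V$ is a partition of $V$; $\mathcal{M}/\mathscr{C}$ denotes the shortest-path metric on $\mathscr{C}$ of the graph obtained from the complete weighted graph on $V$ by contracting each cluster of $\mathscr{C}$ into a single vertex. For clusterings $\mathscr{C}_1$ of $V_1$ and $\mathscr{C}_2$ of $V_2$, write $\mathscr{C}_1\preceq\mathscr{C}_2$ if every cluster of $\mathscr{C}_1$ is contained in some cluster of $\mathscr{C}_2$. Clustering procedure: ${\sf level}(v)=\lceil\log_2{\sf dist}_{\mathcal{M}}(v,\text{mate of }v)\rceil$, ${\sf level}(C)=\max_{v\in C}{\sf level}(v)$, $L=\max_v{\sf level}(v)$. $\mathscr{C}_0$ is the singleton clustering. For $i=0,\dots,L$: $C\in\mathscr{C}_i$ is $i$-active if ${\sf level}(C)\ge i$; $H_i$ has as vertices the $i$-active clusters of $\mathscr{C}_i$, with an edge between distinct $C_1,C_2$ iff ${\sf dist}_{\mathcal{M}/\mathscr{C}_i}(C_1,C_2)<2^{i+1}$; $\mathscr{C}_{i+1}$ consists of the non-$i$-active clusters of $\mathscr{C}_i$ together with, for each connected component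 of $H_i$, the union of its clusters. Online setting: pairs arrive in order; for $1\le t\le n$ the instance $(\mathcal{M}^{(t)},D^{(t)})$ consists of the first $t$ pairs and the metric restricted to their terminals. Running the procedure yields $L^{(t)},\mathscr{C}^{(t)}_i,H^{(t)}_i$; for $i\ge L^{(t)}+1$, $\mathscr{C}^{(t)}_i:=\mathscr{C}^{(t)}_{L^{(t)}+1}$ and $H^{(t)}_i$ is empty; for $t=0$ all $\mathscr{C}^{(0)}_i,H^{(0)}_i$ are empty. It holds that $\mathscr{C}^{(t-1)}_i\preceq\mathscr{C}^{(t)}_i$. Virtual forests are chosen recursively in $t$: $\hat F^{(0)}_i=\emptyset$. Given the spanning forest $\hat F^{(t-1)}_i$ of $H^{(t-1)}_i$, for each edge $(C_1,C_2)\in\hat F^{(t-1)}_i$ let $D_1,D_2$ be the clusters of $\mathscr{C}^{(t)}_i$ containing $C_1,C_2$; if $D_1\ne D_2$ then $(D_1,D_2)$ is an edge of $H^{(t)}_i$, called inherited. Let $\hat F^{(t)}_{{\rm inh},i}$ be an arbitrary spanning forest of the subgraph of $H^{(t)}_i$ formed by its inherited edges, and let $\hat F^{(t)}_i$ be an arbitrary spanning forest of $H^{(t)}_i$ containing $\hat F^{(t)}_{{\rm inh},i}$. Finally, $\mathscr{C}^{(t)}_{{\rm inh},i}$ is the clustering consisting of the non-$i$-active clusters of $\mathscr{C}^{(t)}_i$ together with, for each connected component of the graph with vertex set $V(H^{(t)}_i)$ and edge set $\hat F^{(t)}_{{\rm inh},i}$, the union of the clusters in that component. *)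

(* Defs.v *)
From HB Require Import structures.
From mathcomp Require Import all_boot all_order all_algebra.
From mathcomp Require Import boolp reals.
Set Implicit Arguments. Unset Strict Implicit. Unset Printing Implicit Defensive.
Import Order.TTheory GRing.Theory Num.Theory.
Local Open Scope ring_scope.

Section OnlineClustering.
(* n demand pairs; pair j consists of terminals u_j = (j,false), v_j = (j,true).
   Pairs arrive in the order of their index j. *)
Variable n : nat.
Variable R : realType.
Local Notation V := ('I_n * bool)%type.
Variable d : V -> V -> R.

Definition mate (v : V) : V := (v.1, ~~ v.2).

(* level(v) = ceil(log2 dist(v, mate v)), i.e. (as dist >= 1) the least
   natural k with dist(v, mate v) <= 2^k. *)
Definition lvl (v : V) : nat :=
  find (fun k : nat => d v (mate v) <= 2 ^+ k)
       (iota 0 (Num.truncn (d v (mate v))).+2).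

Definition clvl (C : {set V}) : nat := \max_(v in C) lvl v.

Definition Vt (t : nat) : {set V} := [set v : V | (v.1 : nat) < t]%N.

(* walks in the graph obtained from the complete weighted graph by contracting
   every cluster of P: each step uses an original edge (x,y) leaving the
   current cluster at x and arriving in the cluster of P containing y *)
Fixpoint cwalk (P : {set {set V}}) (A B : {set V}) (s : seq (V * V)) : bool :=
  if s is p :: s' then
    (p.1 \in A) && [exists A' in P, (p.2 \in A') && cwalk P A' B s']
  else A == B.

Definition cdist_lt (P : {set {set V}}) (A B : {set V}) (r : R) : Prop :=
  exists s : seq (V * V), cwalk P A B s /\ \sum_(p <- s) d p.1 p.2 < r.

Definition active (P : {set {set V}}) (i : nat) : {set {set V}} :=
  [set C in P | (i <= clvl C)%N].

(* graphs on clusters: edges are 2-element sets of clusters *)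
Definition adj (E : {set {set {set V}}}) : rel {set V} :=
  fun a b => [set a; b] \in E.

Definition Hedges (P : {set {set V}}) (i : nat) : {set {set {set V}}} :=
  [set e : {set {set V}} | [exists C1 : {set V}, exists C2 : {set V},
     [&& e == [set C1; C2], C1 \in active P i, C2 \in active P i, C1 != C2 &
         `[< cdist_lt P C1 C2 (2 ^+ i.+1) >] ] ] ].

Definition comp_union (P : {set {set V}}) (i : nat) (E : {set {set {set V}}})
    (C : {set V}) : {set V} :=
  \bigcup_(D in active P i | connect (adj E) C D) D.

Definition merge (P : {set {set V}}) (i : nat) (E : {set {set {set V}}})
    : {set {set V}} :=
  [set C in P | C \notin active P i] :|: [set comp_union P i E C | C in active P i].

(* C^{(t)}_i : the clustering procedure run on the instance of the first t pairs;
   C_{i+1} = merge along H_i.  (For i > L^{(t)} nothing is active, so this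
   agrees with the convention C^{(t)}_i = C^{(t)}_{L^{(t)}+1}; for t = 0 all
   clusterings are empty.) *)
Fixpoint clus (t i : nat) : {set {set V}} :=
  if i is i'.+1 then merge (clus t i') i' (Hedges (clus t i') i')
  else [set [set v] | v in Vt t].

Definition acyclic (F : {set {set {set V}}}) : Prop :=
  ~ exists s : seq {set V}, [&& uniq s, (2 < size s)%N & cycle (adj F) s].

Definition spforest (Vs : {set {set V}}) (E F : {set {set {set V}}}) : Prop :=
  [/\ F \subset E, acyclic F &
      {in Vs &, forall a b, connect (adj F) a b = connect (adj E) a b}].

Definition inh_edges (Fprev : {set {set {set V}}}) (t i : nat)
    : {set {set {set V}}} :=
  Hedges (clus t i) i :&:
  [set e : {set {set V}} | [exists C1 : {set V}, exists C2 : {set V},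
     exists D1 : {set V}, exists D2 : {set V},
     [&& [set C1; C2] \in Fprev, D1 \in clus t i, D2 \in clus t i,
         C1 \subset D1, C2 \subset D2, D1 != D2 & e == [set D1; D2]] ] ].

Definition refines (P1 P2 : {set {set V}}) : Prop :=
  forall C, C \in P1 -> exists2 D, D \in P2 & C \subset D.

Definition valid_forests (Fhat Finh : nat -> nat -> {set {set {set V}}}) : Prop :=
  (forall i, Fhat 0%N i = set0) /\
  (forall t i, (1 <= t <= n)%N ->
     [/\ spforest (active (clus t i) i) (inh_edges (Fhat t.-1 i) t i) (Finh t i),
         Finh t i \subset Fhat t i &
         spforest (active (clus t i) i) (Hedges (clus t i) i) (Fhat t i)]).

Definition clus_inh (Finh : nat -> nat -> {set {set {set V}}}) (t i : nat)
    : {set {set V}} :=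
  merge (clus t i) i (Finh t i).

End OnlineClustering.

(* Main.v *)
Require Import Defs.
From HB Require Import structures.
From mathcomp Require Import all_boot all_order all_algebra.
From mathcomp Require Import boolp reals.
Import Order.TTheory GRing.Theory Num.Theory.
Local Open Scope ring_scope.
Set Implicit Arguments. Unset Strict Implicit.
Section H.
Variable n : nat.
Variable R : realType.
Local Notation V := ('I_n * bool)%type.
Variable d : V -> V -> R.

Lemma clvl_sub (A D : {set V}) : A \subset D -> (clvl d A <= clvl d D)%N.
Proof.
move=> sAD; apply/bigmax_leqP => v vA.
by apply: leq_bigmax_cond; apply: (subsetP sAD).
Qed.

Lemma cwalk_map (P Q : {set {set V}}) (B D2 : {set V}) :
  refines P Q -> D2 \in Q -> B \subset D2 ->
  forall (s : seq (V * V)) (A D : {set V}), cwalk P A B s -> A \subset D -> (s = [::] -> D = D2) ->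
  cwalk Q D D2 s.
Proof.
move=> PQ QD2 BD2; elim=> [|p s IH] A D /=.
  by move=> _ _ /(_ erefl) ->.
case/andP=> pA /existsP[A' /and3P[A'P pA' w]] AD _.
rewrite (subsetP AD _ pA) /=; apply/existsP.
case: s IH w => [|q s] IH w.
  exists D2; rewrite QD2 /=; move: w => /= /eqP eA'.
  by rewrite (subsetP BD2) ?eqxx // -eA'.
have [D' D'Q A'D'] := PQ _ A'P.
exists D'; rewrite D'Q (subsetP A'D' _ pA') /=.
exact: (IH A').
Qed.

Lemma set2_eq (a b c e : {set V}) : [set a; b] = [set c; e] ->
  (a = c /\ b = e) \/ (a = e /\ b = c) \/ (a = b /\ c = e).
Proof.
move=> E.
have ha : a \in [set c; e] by rewrite -E !inE eqxx.
have hb : b \in [set c; e] by rewrite -E !inE eqxx orbT.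
have hc : c \in [set a; b] by rewrite E !inE eqxx.
have he : e \in [set a; b] by rewrite E !inE eqxx orbT.
move: ha hb hc he; rewrite !inE.
case/orP=> /eqP ea; case/orP=> /eqP eb; case/orP=> /eqP ec; case/orP=> /eqP ee;
  subst; auto.
Qed.

Definition fpick (Q : {set {set V}}) (A : {set V}) :=
  odflt A [pick D in Q | A \subset D].

Lemma fpickP (P Q : {set {set V}}) (A : {set V}) : refines P Q -> A \in P -> fpick Q A \in Q /\ A \subset fpick Q A.
Proof.
move=> PQ AP; rewrite /fpick; case: pickP => [D /andP[]|] //= H.
have [D DQ AD] := PQ _ AP.
by move: (H D); rewrite DQ AD.
Qed.

Lemma hedge_map (P Q : {set {set V}}) i (a b : {set V}) : refines P Q -> [set a; b] \in Hedges d P i ->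
  [/\ a \in active d P i, b \in active d P i &
   fpick Q a = fpick Q b \/ [set fpick Q a; fpick Q b] \in Hedges d Q i].
Proof.
move=> PQ; rewrite inE => /existsP[C1 /existsP[C2 /and5P[/eqP E C1a C2a C12 cd]]].
have actP : forall X, X \in active d P i -> X \in P /\ (i <= clvl d X)%N.
  by move=> X; rewrite inE => /andP[].
have mapact : forall X, X \in active d P i -> fpick Q X \in active d Q i.
  move=> X /actP[XP lX]; have [fQ sf] := fpickP PQ XP.
  by rewrite inE fQ (leq_trans lX) ?clvl_sub.
have key : fpick Q C1 = fpick Q C2 \/ [set fpick Q C1; fpick Q C2] \in Hedges d Q i.
  have [-> | ne] := eqVneq (fpick Q C1) (fpick Q C2); first by left.
  right; rewrite inE; apply/existsP; exists (fpick Q C1); apply/existsP; exists (fpick Q C2).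
  rewrite eqxx !mapact //= ne /=; apply/asboolP.
  move: cd => /asboolP[s [w ls]]; exists s; split=> //.
  have [C1P _] := actP _ C1a; have [C2P _] := actP _ C2a.
  have [f1Q s1] := fpickP PQ C1P; have [f2Q s2] := fpickP PQ C2P.
  apply: (cwalk_map PQ f2Q s2 w s1) => s0; rewrite s0 /= in w.
  by move/eqP: w => ->.
case: (set2_eq E) => [[-> ->]|[[-> ->]|[eab e12]]].
- by split.
- split=> //; case: key => [->|h]; first by left.
  by right; rewrite setUC.
- by rewrite e12 eqxx in C12.
Qed.

Lemma connect_map (T : finType) (e e' : rel T) (g : T -> T) :
  (forall a b, e a b -> connect e' (g a) (g b)) ->
  forall x y, connect e x y -> connect e' (g x) (g y).
Proof.
move=> H x y /connectP[p pth ->] {y}.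
elim: p x pth => [|z p IH] x /=; first by rewrite connect0.
case/andP=> exz pz; exact: connect_trans (H _ _ exz) (IH _ pz).
Qed.

Lemma clus0 i : clus d 0 i = set0.
Proof.
elim: i => [|i IH] /=.
  apply/setP=> x; rewrite inE; apply/negbTE; apply/imsetP => -[v].
  by rewrite inE ltn0.
rewrite IH /Defs.merge; apply/setP=> x; rewrite !inE; apply/negbTE.
rewrite negb_or; apply/andP; split; first by [].
by apply/imsetP => -[C]; rewrite !inE.
Qed.

Lemma comp_union_sub (P : {set {set V}}) i (E : {set {set {set V}}}) (C D : {set V}) : D \in active d P i -> connect (adj E) C D ->
  D \subset comp_union d P i E C.
Proof.
move=> DA cCD; rewrite /comp_union.
by apply: (bigcup_max D) => //; apply/andP.
Qed.

Lemma merge_sup (P : {set {set V}}) i (E : {set {set {set V}}}) (D : {set V}) : D \in P -> exists2 D', D' \in Defs.merge d P i E & D \subset D'.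
Proof.
move=> DP; case: (boolP (D \in active d P i)) => act.
  exists (comp_union d P i E D); first by rewrite inE; apply/orP; right; apply/imsetP; exists D.
  exact: comp_union_sub.
by exists D => //; rewrite inE; apply/orP; left; rewrite inE DP act.
Qed.

Lemma merge_refine (P Q : {set {set V}}) i (EP EQ : {set {set {set V}}}) :
  refines P Q ->
  (forall a b, a \in active d P i -> b \in active d P i -> connect (adj EP) a b ->
     connect (adj EQ) (fpick Q a) (fpick Q b)) ->
  refines (Defs.merge d P i EP) (Defs.merge d Q i EQ).
Proof.
move=> PQ Hc C; rewrite inE => /orP[|].
  rewrite inE => /andP[CP _]; have [D DQ CD] := PQ _ CP.
  have [D' D'm DD'] := merge_sup i EQ DQ.
  by exists D' => //; apply: subset_trans DD'.
case/imsetP=> C0 C0a ->.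
have C0P : C0 \in P by move: C0a; rewrite inE => /andP[].
have mapact : forall X, X \in active d P i -> fpick Q X \in active d Q i.
  move=> X; rewrite inE => /andP[XP lX]; have [fQ sf] := fpickP PQ XP.
  by rewrite inE fQ (leq_trans lX) ?clvl_sub.
exists (comp_union d Q i EQ (fpick Q C0)).
  by rewrite inE; apply/orP; right; apply/imsetP; exists (fpick Q C0); rewrite ?mapact.
apply/bigcupsP => D' /andP[D'a cD'].
have D'P : D' \in P by move: D'a; rewrite inE => /andP[].
have [_ s'] := fpickP PQ D'P.
apply: subset_trans s' _; apply: comp_union_sub; first exact: mapact.
exact: Hc.
Qed.

Lemma clus_refine t i : refines (clus d t i) (clus d t.+1 i).
Proof.
elim: i => [|i IH] /=.
  move=> C /imsetP[v]; rewrite inE => vt ->; exists [set v] => //.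
  by apply/imsetP; exists v; rewrite // inE ltnS ltnW.
apply: merge_refine => // a b aa ba.
apply: connect_map => x y.
rewrite /adj => /(hedge_map IH) [_ _ [->|h]]; first exact: connect0.
exact: connect1.
Qed.

Lemma mapact (P Q : {set {set V}}) i X : refines P Q -> X \in active d P i ->
  fpick Q X \in active d Q i.
Proof.
move=> PQ; rewrite inE => /andP[XP lX]; have [fQ sf] := fpickP PQ XP.
by rewrite inE fQ (leq_trans lX) ?clvl_sub.
Qed.

End H.

Theorem lemma4p4 (n : nat) (R : realType)
    (d : 'I_n * bool -> 'I_n * bool -> R)
    (d_refl : forall x, d x x = 0)
    (d_sym : forall x y, d x y = d y x)
    (d_tri : forall x y z, d x z <= d x y + d y z)
    (d_ge1 : forall x y, x != y -> 1 <= d x y)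
    (Fhat Finh : nat -> nat -> {set {set {set 'I_n * bool}}})
    (Hvalid : valid_forests d Fhat Finh) :
  forall t i : nat, (1 <= t <= n)%N ->
    refines (clus d t.-1 i.+1) (clus_inh d Finh t i).
Proof.
move=> t i /andP[t1 tn].
case: t t1 tn => [|[|t']] // _ tn.
  by move=> C; rewrite clus0 inE.
have [_ Hv] := Hvalid.
have [[_ _ Ccur] _ _] := Hv t'.+2 i (tn : (0 < t'.+2 <= n)%N).
have [_ _ [Fsub _ Cprev]] := Hv t'.+1 i (ltnW tn : (0 < t'.+1 <= n)%N).
have PQ := @clus_refine n R d t'.+1 i.
rewrite /clus_inh /=.
apply: merge_refine => // a b aa ba cab.
rewrite -Cprev // in cab.
apply: connect_map cab => x y xy.
have xyH : [set x; y] \in Hedges d (clus d t'.+1 i) i by apply: (subsetP Fsub).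
have [xa ya [->|h]] := hedge_map PQ xyH; first exact: connect0.
have [e|ne] := eqVneq (fpick (clus d t'.+2 i) x) (fpick (clus d t'.+2 i) y).
  by rewrite e connect0.
have fxa := mapact PQ xa; have fya := mapact PQ ya.
rewrite Ccur //; apply: connect1; rewrite /adj inE h /=.
have xP : x \in clus d t'.+1 i by move: xa; rewrite inE => /andP[].
have yP : y \in clus d t'.+1 i by move: ya; rewrite inE => /andP[].
have [fxQ sx] := fpickP PQ xP; have [fyQ sy] := fpickP PQ yP.
rewrite inE; apply/existsP; exists x; apply/existsP; exists y.
apply/existsP; exists (fpick (clus d t'.+2 i) x); apply/existsP; exists (fpick (clus d t'.+2 i) y).
by rewrite /= (xy : [set x; y] \in Fhat t'.+1 i) fxQ fyQ sx sy eqxx ne.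
Qed.
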